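(* There is no connected mutation-finite graph with at least $8$ vertices that contains a subgraph isomorphic to $\mathbf{X}_7$.
   Context: A graph here is a finite directed multigraph with no loops and no oriented $2$-cycles; multiple arrows in the same direction are allowed. The mutation $\mu_k\Gamma$ at a vertex $k$: for every pair of arrows $i\to k$, $k\to j$ add an arrow $i\to j$; reverse all arrows incident to $k$; then delete pairs of opposite arrows $i\to j$, $j\to i$ until no oriented $2$-cycles remain. $\Gamma$ is mutation-finite if only finitely many isomorphism classes of graphs are obtainable from it by sequences of mutations. Connected means the underlying undirected graph is connected. Subgraph always means full (induced) subgraph. $\mathbf{X}_7$: vertices $x,y_i,z_i$ ($i=1,2,3$); for each $i=1,2,3$: two arrows $y_i\to z_i$, one arrow $z_i\to x$, one arrow $x\to y_i$ (no other arrows). *)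

(* Defs.v *)
From mathcomp Require Import all_boot all_fingroup.
Set Implicit Arguments. Unset Strict Implicit. Unset Printing Implicit Defensive.

(* A graph on vertex set V is given by its arrow-count function:
   arr i j = number of arrows i -> j. *)
Definition quiver (V : finType) := V -> V -> nat.

Definition valid_quiver (V : finType) (a : quiver V) : Prop :=
  (forall i, a i i = 0) /\ (forall i j, a i j = 0 \/ a j i = 0).

(* Mutation at k: for i, j <> k, add a i k * a k j arrows i -> j (and
   symmetrically a j k * a k i arrows j -> i), then cancel opposite pairs;
   arrows incident to k are reversed. *)
Definition mutate (V : finType) (k : V) (a : quiver V) : quiver V :=
  fun i j =>
    if (i == k) || (j == k) then a j i
    else (a i j + a i k * a k j) - (a j i + a j k * a k i).

Definition mutseq (V : finType) (ks : seq V) (a : quiver V) : quiver V :=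
  foldl (fun b k => mutate k b) a ks.

Definition quiver_iso (V : finType) (a b : quiver V) : Prop :=
  exists s : {perm V}, forall i j, b (s i) (s j) = a i j.

Definition mutation_finite (V : finType) (a : quiver V) : Prop :=
  exists (N : nat) (L : 'I_N -> quiver V),
    forall ks : seq V, exists m : 'I_N, quiver_iso (mutseq ks a) (L m).

Definition quiver_connected (V : finType) (a : quiver V) : Prop :=
  forall i j : V, connect (fun x y => (0 < a x y) || (0 < a y x)) i j.

(* X_7: vertex 0 = x, vertices 1,2,3 = y_1,y_2,y_3, vertices 4,5,6 = z_1,z_2,z_3 *)
Definition X7 : quiver 'I_7 :=
  fun i j =>
    let i' := nat_of_ord i in let j' := nat_of_ord j in
    if (1 <= i' <= 3) && (j' == i' + 3) then 2
    else if (4 <= i' <= 6) && (j' == 0) then 1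
    else if (i' == 0) && (1 <= j' <= 3) then 1
    else 0.

Definition has_induced_subgraph (V W : finType) (a : quiver V) (b : quiver W) : Prop :=
  exists f : W -> V, injective f /\ forall i j, a (f i) (f j) = b i j.

(* Main.v *)
Require Import Defs.
From mathcomp Require Import all_boot all_fingroup.
From Stdlib Require Import ZArith Lia.
Module Grow.
Local Open Scope Z_scope.
Definition fZ (x y : Z) : Z := Z.max x 0 * Z.max y 0 - Z.max (-x) 0 * Z.max (-y) 0.

Lemma f_pp x y : 0 <= x -> 0 <= y -> fZ x y = x * y.
Proof. intros; unfold fZ; replace (Z.max x 0) with x by lia; replace (Z.max y 0) with y by lia; replace (Z.max (-x) 0) with 0 by lia; replace (Z.max (-y) 0) with 0 by lia; lia. Qed.
Lemma f_nn x y : x <= 0 -> y <= 0 -> fZ x y = - (x * y).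
Proof. intros; unfold fZ; replace (Z.max x 0) with 0 by lia; replace (Z.max y 0) with 0 by lia; replace (Z.max (-x) 0) with (-x) by lia; replace (Z.max (-y) 0) with (-y) by lia; lia. Qed.
Lemma f_pn x y : 0 <= x -> y <= 0 -> fZ x y = 0.
Proof. intros; unfold fZ; replace (Z.max x 0) with x by lia; replace (Z.max y 0) with 0 by lia; replace (Z.max (-x) 0) with 0 by lia; replace (Z.max (-y) 0) with (-y) by lia; lia. Qed.
Lemma f_np x y : x <= 0 -> 0 <= y -> fZ x y = 0.
Proof. intros; unfold fZ; replace (Z.max x 0) with 0 by lia; replace (Z.max y 0) with y by lia; replace (Z.max (-x) 0) with (-x) by lia; replace (Z.max (-y) 0) with 0 by lia; lia. Qed.

Ltac fsimp :=
  match goal with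
  | |- context [fZ ?x ?y] =>
    let H1 := fresh in let H2 := fresh in
    destruct (Z.le_ge_cases 0 x) as [H1|H1]; destruct (Z.le_ge_cases 0 y) as [H2|H2];
    let E := fresh in
    first [pose proof (f_pp x y H1 H2) as E | pose proof (f_pn x y H1 H2) as E
          | pose proof (f_np x y H1 H2) as E | pose proof (f_nn x y H1 H2) as E];
    repeat match goal with Hh : context [fZ _ _] |- _ => tryif constr_eq Hh E then fail else revert Hh end;
    rewrite E; clear E; intros
  end.

Definition mu (c : nat) (s : Z * Z * Z) : Z * Z * Z :=
  let '(p, q, r) := s in
  match c with
  | O => (- p, - q, r + fZ (- p) q)
  | 1%nat => (- p, q + fZ p r, - r)
  | _ => (p + fZ q (- r), - q, - r)
  end.

Definition run (cs : list nat) (s : Z * Z * Z) := foldl (fun s c => mu c s) s cs.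

Definition Pz (s : Z * Z * Z) : Prop :=
  let '(p, q, r) := s in
  (3 <= Z.abs p \/ 3 <= Z.abs q \/ 3 <= Z.abs r) /\
  ((p <> 0 /\ q <> 0) \/ (p <> 0 /\ r <> 0) \/ (q <> 0 /\ r <> 0)).

Definition Sz (s : Z * Z * Z) : Z := let '(p, q, r) := s in Z.abs p + Z.abs q + Z.abs r.

Ltac trycs cs := exists cs; unfold Pz, Sz; simpl; repeat fsimp; split; try split; nia.

Ltac absimp x H H1 H2 H3 := revert H H1 H2 H3;
  first [rewrite (Z.abs_eq x ltac:(lia)) | rewrite (Z.abs_neq x ltac:(lia)) | idtac]; intros H H1 H2 H3.

Lemma step p q r : Pz (p, q, r) -> exists cs, Pz (run cs (p, q, r)) /\ Sz (p, q, r) < Sz (run cs (p, q, r)).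
Proof.
  intros H; unfold Pz in H.
  destruct (Z.lt_trichotomy p 0) as [Hp|[Hp|Hp]];
  destruct (Z.lt_trichotomy q 0) as [Hq|[Hq|Hq]];
  destruct (Z.lt_trichotomy r 0) as [Hr|[Hr|Hr]];
  try (exfalso; lia);
  destruct (Z.le_ge_cases (Z.abs p) (Z.abs q)) as [H1|H1];
  destruct (Z.le_ge_cases (Z.abs p) (Z.abs r)) as [H2|H2];
  destruct (Z.le_ge_cases (Z.abs q) (Z.abs r)) as [H3|H3];
  absimp p H H1 H2 H3; absimp q H H1 H2 H3; absimp r H H1 H2 H3;
  first [ trycs (0%nat :: nil) | trycs (1%nat :: nil) | trycs (2%nat :: nil)
        | trycs (1%nat :: 0%nat :: nil) | trycs (0%nat :: 1%nat :: nil) | trycs (0%nat :: 2%nat :: nil)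
        | idtac ].
Qed.

Lemma grow s : Pz s -> forall n : nat, exists cs, Pz (run cs s) /\ Sz s + Z.of_nat n <= Sz (run cs s).
Proof.
  intros Hs n; induction n as [|n [cs [H1 H2]]].
  - exists nil; split; [exact Hs|simpl; lia].
  - destruct (run cs s) as [[p q] r] eqn:E.
    destruct (step p q r H1) as [cs' [H3 H4]].
    exists (cs ++ cs')%list. unfold run in *. rewrite foldl_cat E. split; [exact H3|]. lia.
Qed.
End Grow.

Set Implicit Arguments. Unset Strict Implicit. Unset Printing Implicit Defensive.

Import Grow.

Fixpoint hasL {T} (p : T -> bool) (s : seq T) : bool :=
  if s is x :: s' then (if p x then true else hasL p s') else false.
Fixpoint allL {T} (p : T -> bool) (s : seq T) : bool :=
  if s is x :: s' then (if p x then allL p s' else false) else true.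

Definition zent (M : seq (seq Z)) (i j : nat) : Z := nth 0%Z (nth [::] M i) j.

Fixpoint hasIdx {T} (x0 : T) (p : nat -> T -> bool) (js : seq nat) (r : seq T) : bool :=
  if js is j :: js' then (if p j (head x0 r) then true else hasIdx x0 p js' (behead r)) else false.

Fixpoint rowZ (i k : nat) (cik : Z) (js : seq nat) (ri rk : seq Z) : seq Z :=
  if js is j :: js' then
    (if (i == k) || (j == k) then (- head 0%Z ri)%Z else (head 0%Z ri + fZ cik (head 0%Z rk))%Z)
      :: rowZ i k cik js' (behead ri) (behead rk)
  else [::].

Fixpoint rowsZ (k : nat) (rk : seq Z) (ixs : seq nat) (M : seq (seq Z)) : seq (seq Z) :=
  if ixs is i :: ixs' then
    (let ri := head [::] M in rowZ i k (nth 0%Z ri k) (iota 0 8) ri rk) :: rowsZ k rk ixs' (behead M)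
  else [::].

Definition mutZ (k : nat) (M : seq (seq Z)) : seq (seq Z) := rowsZ k (nth [::] M k) (iota 0 8) M.

Definition heavyZ (M : seq (seq Z)) : bool :=
  hasIdx [::] (fun i ri => hasIdx 0%Z (fun j x => if i == j then false else
     if (3 <=? Z.abs x)%Z then
       hasL (fun k => if (k == i) || (k == j) then false
                      else (negb (zent M i k =? 0)%Z || negb (zent M j k =? 0)%Z)) (iota 0 8)
     else false) (iota 0 8) ri) (iota 0 8) M.

Fixpoint worksZ (ks : seq nat) (M : seq (seq Z)) : bool :=
  if heavyZ M then true else (if ks is k :: ks' then worksZ ks' (mutZ k M) else false).

Definition X7n (i' j' : nat) : nat :=
    if (1 <= i' <= 3) && (j' == i' + 3) then 2
    else if (4 <= i' <= 6) && (j' == 0) then 1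
    else if (i' == 0) && (1 <= j' <= 3) then 1
    else 0.

Definition Ed (d : seq (nat * nat)) (i j : nat) : nat :=
  if (i < 7) && (j < 7) then X7n i j
  else if (i == 7) && (j < 7) then (nth (0,0) d j).1
  else if (i < 7) && (j == 7) then (nth (0,0) d i).2 else 0.

Definition X7Zrows : seq (seq Z) := Eval vm_compute in
  [seq [seq (Z.of_nat (X7n i j) - Z.of_nat (X7n j i))%Z | j <- iota 0 7] | i <- iota 0 7].

Definition MofZ (d : seq (nat * nat)) : seq (seq Z) :=
  [seq (rcons rp.1 (Z.of_nat rp.2.2 - Z.of_nat rp.2.1)%Z) | rp <- zip X7Zrows d] ++
  [:: rcons [seq (Z.of_nat p.1 - Z.of_nat p.2)%Z | p <- d] 0%Z].

Definition cover8 : seq (seq nat) :=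
  [:: [:: 0; 2; 5; 3; 4; 3]; [:: 0; 1; 4; 2; 6; 2]; [:: 3; 6; 3]; [:: 5; 2; 5];
      [:: 2; 5; 2]; [:: 1; 4; 1]; [:: 4; 1; 4]; [:: 0; 1; 4; 3; 5; 3]].

Definition pairs5 : seq (nat * nat) := [:: (0,0); (1,0); (2,0); (0,1); (0,2)].

Definition checkd (d : seq (nat * nat)) : bool :=
  if allL (fun p => p == (0,0)) d then true else let M := MofZ d in hasL (fun ks => worksZ ks M) cover8.

Definition allcheck : bool :=
  allL (fun p0 => allL (fun p1 => allL (fun p2 => allL (fun p3 => allL (fun p4 =>
  allL (fun p5 => allL (fun p6 => checkd [:: p0; p1; p2; p3; p4; p5; p6]) pairs5)
  pairs5) pairs5) pairs5) pairs5) pairs5) pairs5.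

Lemma allcheck_true : allcheck = true.
Proof. vm_compute. reflexivity. Qed.

From mathcomp Require Import zify.

Lemma hasL_has T (p : T -> bool) s : hasL p s = has p s.
Proof. by elim: s => //= x s IH; case: (p x). Qed.
Lemma allL_all T (p : T -> bool) s : allL p s = all p s.
Proof. by elim: s => //= x s IH; case: (p x). Qed.

Lemma hasIdx_sound T (x0 : T) p j0 m r :
  hasIdx x0 p (iota j0 m) r -> exists2 j, j < m & p (j0 + j) (nth x0 r j).
Proof.
  elim: m j0 r => [|m IH] j0 r //=.
  case: ifP => [h _| _ /IH [j hj hp]].
  - by exists 0; rewrite // addn0 nth0.
  - by exists j.+1; rewrite // -addSnnS -nth_behead.
Qed.

Lemma nth_rowZ i k cik j0 m ri rk j : j < m ->
  nth 0%Z (rowZ i k cik (iota j0 m) ri rk) j =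
  (if (i == k) || (j0 + j == k) then (- nth 0%Z ri j)%Z else (nth 0%Z ri j + fZ cik (nth 0%Z rk j))%Z).
Proof.
  elim: m j0 ri rk j => [|m IH] j0 ri rk [|j] //= hj.
  - by rewrite addn0 !nth0.
  - by rewrite IH // addSnnS !nth_behead.
Qed.

Lemma nth_rowsZ k rk i0 m M i : i < m ->
  nth [::] (rowsZ k rk (iota i0 m) M) i =
  rowZ (i0 + i) k (nth 0%Z (nth [::] M i) k) (iota 0 8) (nth [::] M i) rk.
Proof.
  elim: m i0 M i => [|m IH] i0 M [|i] //= hi.
  - by rewrite addn0 nth0.
  - by rewrite IH // addSnnS !nth_behead.
Qed.

Lemma zent_mutZ k M i j : i < 8 -> j < 8 ->
  zent (mutZ k M) i j = if (i == k) || (j == k) then (- zent M i j)%Z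
                        else (zent M i j + fZ (zent M i k) (zent M k j))%Z.
Proof.
  move=> hi hj. by rewrite /zent /mutZ nth_rowsZ // nth_rowZ.
Qed.

Lemma heavyZ_sound M : heavyZ M -> exists i j k, [/\ i < 8, j < 8, k < 8, i != j &
   [/\ k != i, k != j, (3 <= Z.abs (zent M i j))%Z & (zent M i k <> 0 \/ zent M j k <> 0)%Z]].
Proof.
  rewrite /heavyZ => H; case: (hasIdx_sound H) => i hi {H}; rewrite add0n => H.
  case: (hasIdx_sound H) => j hj {H}; rewrite add0n.
  case: eqP => // hij. case: ifP => // h3. rewrite hasL_has => /hasP [k].
  rewrite mem_iota /= => hk. case: ifP => // /norP [hki hkj] hz.
  exists i, j, k; split => //; first by apply/eqP.
  split => //; first by move/Z.leb_le: h3.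
  case/orP: hz => /negP h; [left|right] => h0; apply: h; exact/Z.eqb_eq.
Qed.

Definition mutseqZ (ks : seq nat) (M : seq (seq Z)) := foldl (fun M k => mutZ k M) M ks.

Lemma worksZ_sound ks M : all (fun k => k < 8) ks -> worksZ ks M ->
  exists ks' : seq 'I_8, heavyZ (mutseqZ (map val ks') M).
Proof.
  elim: ks M => [|k ks IH] M /=.
  - by case: ifP => // h _ _; exists [::].
  - case/andP => hk hall. case: ifP => h.
    + by move=> _; exists [::].
    + move/(IH _ hall) => [ks' H]. by exists (Ordinal hk :: ks').
Qed.

Lemma valid_mutate (V : finType) (k : V) (a : quiver V) :
  valid_quiver a -> valid_quiver (mutate k a).
Proof.
  move=> [H0 H1]; split.
  - move=> i; rewrite /mutate; case: ifP => _ //; lia.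
  - move=> i j; rewrite /mutate [(j == k) || _]orbC; case: ifP => _.
    + by case: (H1 j i); [left|right].
    + lia.
Qed.

Lemma valid_mutseq (V : finType) ks (a : quiver V) :
  valid_quiver a -> valid_quiver (mutseq ks a).
Proof. elim: ks a => //= k ks IH a Ha; apply: IH; exact: valid_mutate. Qed.

Definition bz (V : finType) (a : quiver V) (i j : V) : Z := (Z.of_nat (a i j) - Z.of_nat (a j i))%Z.

Lemma bz_mutate (V : finType) (k : V) (a : quiver V) i j : valid_quiver a ->
  bz (mutate k a) i j = if (i == k) || (j == k) then (- bz a i j)%Z
                        else (bz a i j + fZ (bz a i k) (bz a k j))%Z.
Proof.
  move=> [H0 H1]; rewrite /bz /mutate [(j == k) || _]orbC; case: ifP => _; first lia.
  have := H1 i k; have := H1 j k; unfold fZ; nia.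
Qed.

Lemma link n (g : 'I_8 -> 'I_n) (ginj : injective g) (ks : seq 'I_8) :
  forall (a : quiver 'I_n) M, valid_quiver a ->
  (forall x y : 'I_8, zent M x y = bz a (g x) (g y)) ->
  forall x y : 'I_8, zent (mutseqZ (map val ks) M) x y = bz (mutseq (map g ks) a) (g x) (g y).
Proof.
  elim: ks => [|k ks IH] a M Hv HM x y //=.
  apply: IH; first exact: valid_mutate.
  move=> x' y'. rewrite zent_mutZ // bz_mutate // !(eqtype.inj_eq ginj) -!HM.
  by rewrite -!val_eqE.
Qed.

Definition st (V : finType) (u w t : V) (a : quiver V) : Z * Z * Z :=
  (bz a u w, bz a u t, bz a w t).

Definition vert (V : finType) (u w t : V) (c : nat) : V :=
  match c with 0 => u | 1 => w | _ => t end.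

Lemma bz_anti (V : finType) (a : quiver V) i j : bz a j i = (- bz a i j)%Z.
Proof. rewrite /bz; lia. Qed.

Lemma st_run (V : finType) (u w t : V) : u != w -> u != t -> w != t ->
  forall cs (a : quiver V), valid_quiver a ->
  st u w t (mutseq (map (vert u w t) cs) a) = run cs (st u w t a).
Proof.
  move=> huw hut hwt; elim=> [|c cs IH] a Ha //=.
  rewrite IH; last exact: valid_mutate.
  have hwu : w != u by rewrite eq_sym. have htu : t != u by rewrite eq_sym.
  have htw : t != w by rewrite eq_sym.
  case: c => [|[|c]]; cbv [mu st vert]; cbv beta iota;
  rewrite !bz_mutate // ?eqxx ?(negbTE huw) ?(negbTE hut) ?(negbTE hwt)
     ?(negbTE hwu) ?(negbTE htu) ?(negbTE htw) ?orbT ?orTb ?orbF ?orFb;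
  rewrite ?(bz_anti a w u) ?(bz_anti a t w) ?Z.opp_involutive //.
Qed.

Lemma mf_bound n (a : quiver 'I_n) : mutation_finite a ->
  exists Bd, forall ks x y, mutseq ks a x y <= Bd.
Proof.
  case=> N [L HL].
  exists (\max_(m < N) \max_(x : 'I_n) \max_(y : 'I_n) L m x y) => ks x y.
  case: (HL ks) => m [s Hs]. rewrite -Hs.
  apply: (leq_trans _ (leq_bigmax m)).
  apply: (leq_trans _ (leq_bigmax (s x))).
  exact: (leq_bigmax (s y)).
Qed.

Lemma mutseq_cat (V : finType) ks1 ks2 (a : quiver V) :
  mutseq (ks1 ++ ks2) a = mutseq ks2 (mutseq ks1 a).
Proof. by rewrite /mutseq foldl_cat. Qed.

Lemma no_growth n (a : quiver 'I_n) Bd : (forall ks x y, mutseq ks a x y <= Bd) ->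
  valid_quiver a -> forall ks0 (u w t : 'I_n), u != w -> u != t -> w != t ->
  Pz (st u w t (mutseq ks0 a)) -> False.
Proof.
  move=> HB Hv ks0 u w t huw hut hwt HP.
  case: (grow _ HP (3 * Bd).+1) => cs [_ Hge].
  rewrite -st_run // in Hge; last exact: valid_mutseq.
  rewrite -mutseq_cat in Hge.
  move: Hge; set b := mutseq (ks0 ++ _) a; set b0 := mutseq ks0 a.
  rewrite /Sz /st /bz; cbv beta iota.
  have := HB (ks0 ++ map (vert u w t) cs) u w; have := HB (ks0 ++ map (vert u w t) cs) w u.
  have := HB (ks0 ++ map (vert u w t) cs) u t; have := HB (ks0 ++ map (vert u w t) cs) t u.
  have := HB (ks0 ++ map (vert u w t) cs) w t; have := HB (ks0 ++ map (vert u w t) cs) t w.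
  rewrite -/b. lia.
Qed.

Lemma exit_edge (T : finType) (e : rel T) (A : seq T) x y :
  connect e x y -> x \in A -> y \notin A ->
  exists x', exists y', [/\ x' \in A, y' \notin A & e x' y'].
Proof.
  move/connectP => [p Hp ->]. elim: p x Hp => [|z p IH] x /= Hp HA Hy.
  - by rewrite HA in Hy.
  - case/andP: Hp => exz Hp. case Hz: (z \in A).
    + exact: IH Hz Hy.
    + by exists x, z; rewrite HA Hz exz.
Qed.

Lemma allL_in (T : eqType) (p : T -> bool) s x : allL p s = true -> x \in s -> p x = true.
Proof. rewrite allL_all => /allP; apply. Qed.

Lemma in_pairs5 (x y : nat) : x <= 2 -> y <= 2 -> x = 0 \/ y = 0 -> (x, y) \in pairs5.
Proof.
  move=> hx hy [] ->.
  - by case: y hy => [|[|[|]]].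
  - by case: x hx => [|[|[|]]].
Qed.

Lemma MofZ_ok p0 p1 p2 p3 p4 p5 p6 i j : i < 8 -> j < 8 ->
  let d := [:: p0; p1; p2; p3; p4; p5; p6] in
  zent (MofZ d) i j = (Z.of_nat (Ed d i j) - Z.of_nat (Ed d j i))%Z.
Proof.
  move=> hi hj /=.
  case: i hi => [|[|[|[|[|[|[|[|i]]]]]]]] hi //; case: j hj => [|[|[|[|[|[|[|[|j]]]]]]]] hj //;
  vm_compute; reflexivity.
Qed.

Theorem theorem10 (n : nat) (a : quiver 'I_n) :
  8 <= n -> valid_quiver a -> quiver_connected a ->
  has_induced_subgraph a X7 -> ~ mutation_finite a.
Proof.
  move=> hn Hv Hc [f [finj hf]] Hmf.
  have [H0 H1] := Hv.
  case: (mf_bound Hmf) => Bd HB.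
  have [v0 hv0] : exists v0, v0 \notin codom f.
    case: (pickP (fun v => v \notin codom f)) => [v hv|hall]; first by exists v.
    exfalso. have : n <= 7.
      rewrite -{1}(size_enum_ord n) -[7](card_ord 7) -(size_codom f).
      apply: uniq_leq_size (enum_uniq _) _ => x _.
      by have := hall x => /= /negbFE.
    lia.
  have [x' [v [hx' hv hxv]]] := exit_edge (Hc (f ord0) v0) (codom_f f ord0) hv0.
  case/codomP: hx' => c0 hc0; subst x'.
  pose g := fun x : 'I_8 => if (x : nat) < 7 then f (inord x) else v.
  have gin : injective g.
    move=> x y; rewrite /g; case: ifP => hx; case: ifP => hy.
    - move/finj/(congr1 (@nat_of_ord 7)); rewrite !inordK // => h; exact: val_inj.
    - by move=> h; exfalso; move: hv; rewrite -h codom_f.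
    - by move=> h; exfalso; move: hv; rewrite h codom_f.
    - move=> _; apply: val_inj => /=; move/negbT: hx; move/negbT: hy.
      have := ltn_ord x; have := ltn_ord y; lia.
  have hfv : forall c, f c != v by move=> c; apply/eqP => h; move: hv; rewrite -h codom_f.
  case: (boolP [exists c : 'I_7, (2 < a v (f c)) || (2 < a (f c) v)]).
  -
    case/existsP => c hc.
    have hX : forall c : 'I_7,
        bz a (f c) (f (if c == ord0 then Ordinal (isT : 1 < 7) else ord0)) <> 0%Z.
      move=> c1; rewrite /bz !hf; case: c1 => [[|[|[|[|[|[|[|m]]]]]]] hm] //=.
    move: (hX c) => {}hX.
    set c' := (if c == ord0 then _ else _) in hX.
    have hcc : c != c'.
      rewrite /c'; case: (c =P ord0) => [->|h] //. by apply/eqP.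
    apply: (no_growth HB Hv (ks0 := [::]) (u := v) (w := f c) (t := f c')).
    + by rewrite eq_sym hfv.
    + by rewrite eq_sym hfv.
    + by rewrite (eqtype.inj_eq finj).
    + rewrite /Pz /st /=; cbv beta iota.
      move: hc (H1 v (f c)) hX; rewrite /bz => /orP [h|h] hv'; lia.
  -
    move/existsPn => hall.
    pose F := fun c : nat => (a v (f (inord c)), a (f (inord c)) v).
    pose d := [seq F c | c <- iota 0 7].
    have hF : forall c, c < 7 -> F c \in pairs5.
      move=> c hc; rewrite /F; apply: in_pairs5.
      + move: (hall (inord c)); lia.
      + move: (hall (inord c)); lia.
      + case: (H1 v (f (inord c))); auto.
    have hd : checkd d.
      move: allcheck_true; rewrite /allcheck.
      move/allL_in/(_ (hF 0 isT))/allL_in/(_ (hF 1 isT))/allL_in/(_ (hF 2 isT)).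
      move/allL_in/(_ (hF 3 isT))/allL_in/(_ (hF 4 isT))/allL_in/(_ (hF 5 isT)).
      move/allL_in/(_ (hF 6 isT)). by [].
    have hnz : allL (fun p => p == (0,0)) d = false.
      apply/negbTE/negP; rewrite allL_all => /allP /(_ (F c0)).
      have -> : F c0 \in d by apply: map_f; rewrite mem_iota /=.
      move=> /(_ isT); rewrite /F inord_val xpair_eqE => /andP [/eqP h1 /eqP h2].
      by move: hxv; rewrite h1 h2.
    move: hd; rewrite /checkd hnz hasL_has => /hasP [ks hks hw].
    have hall8 : all (fun k => k < 8) ks.
      have : all (fun ks => all (fun k => k < 8) ks) cover8 by [].
      by move/allP/(_ _ hks).
    case: (worksZ_sound hall8 hw) => ks' hh.
    have HM : forall x y : 'I_8, zent (MofZ d) x y = bz a (g x) (g y).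
      move=> x y. rewrite (MofZ_ok _ _ _ _ _ _ _ (ltn_ord x) (ltn_ord y)) /bz.
      have Ed_ok : forall x y : 'I_8, Ed d x y = a (g x) (g y).
        move=> {}x {}y; rewrite /Ed /g.
        case: (ltnP x 7) => hx; case: (ltnP y 7) => hy /=.
        + rewrite hf /X7 /= !inordK //.
        + have hy7 : (y : nat) == 7 by have := ltn_ord y; lia.
          rewrite hy7 andbF /d (nth_map 0) ?size_iota // nth_iota //.
        + have hx7 : (x : nat) == 7 by apply/eqP; have := ltn_ord x; lia.
          rewrite hx7 /= /d (nth_map 0) ?size_iota // nth_iota //.
        + have hx7 : (x : nat) == 7 by apply/eqP; have := ltn_ord x; lia.
          have hy7 : (y : nat) == 7 by apply/eqP; have := ltn_ord y; lia.
          by rewrite ?andbF ?andFb /= H0.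
      by rewrite !Ed_ok.
    case: (heavyZ_sound hh) => i [j [k [hi hj hk hij [hki hkj h3 hz]]]].
    pose I := Ordinal hi; pose J := Ordinal hj; pose K := Ordinal hk.
    apply: (no_growth HB Hv (ks0 := map g ks') (u := g I) (w := g J) (t := g K)).
    + by rewrite (eqtype.inj_eq gin).
    + by rewrite (eqtype.inj_eq gin) eq_sym.
    + by rewrite (eqtype.inj_eq gin) eq_sym.
    + rewrite /Pz /st; cbv beta iota.
      move: h3 hz; rewrite -!(link gin ks' Hv HM) /=.
      lia.
Qed.
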